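(* Let $k$ be a perfect field, $B=k[s]/(s^n)$, and $A$ a $k$-subalgebra of $B$ with maximal ideal $M$ (so $A$ is local with residue field $k$). Let $m=\dim_k(M/M^2)$ and let $e\ge1$ be the largest integer with $M\subseteq s^eB$. If $e<\binom m2$, then the kernel of $\Omega_{A/k}\to\Omega_{B/k}$ is nonzero. *)

(* Defs.v *)
From HB Require Import structures.
From mathcomp Require Import all_boot all_order all_algebra.
Set Implicit Arguments. Unset Strict Implicit. Unset Printing Implicit Defensive.
Import GRing.Theory.
Local Open Scope ring_scope.

Definition perfect_field (k : fieldType) : Prop :=
  forall p : nat, p \in [pchar k] -> forall x : k, exists y : k, y ^+ p = x.

Section TruncPoly.
Variables (k : fieldType) (n : nat).

(* B = k[s]/(s^n) is modelled as the k-vector space 'rV[k]_n of coefficient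
   rows: u represents sum_{i<n} u_i s^i. *)
Definition bmul (u v : 'rV[k]_n) : 'rV[k]_n :=
  \row_(i < n) \sum_(j < n) \sum_(l < n | (j + l)%N == (i : nat)) u 0 j * v 0 l.

Definition bone : 'rV[k]_n := \row_(i < n) ((i : nat) == 0%N)%:R.

(* s^e in B (zero when e >= n) *)
Definition spow (e : nat) : 'rV[k]_n := \row_(i < n) ((i : nat) == e)%:R.

Definition in_spowB (e : nat) (u : 'rV[k]_n) : Prop :=
  exists b : 'rV[k]_n, u = bmul (spow e) b.

Definition maxB : {vspace 'rV[k]_n} := <<[seq spow i | i <- iota 1 n.-1]>>%VS.

Definition is_subalgebra (A : {vspace 'rV[k]_n}) : Prop :=
  bone \in A /\ forall x y, x \in A -> y \in A -> bmul x y \in A.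

Definition maxA (A : {vspace 'rV[k]_n}) : {vspace 'rV[k]_n} := (A :&: maxB)%VS.

End TruncPoly.

(* k-span of all products f x y with x in X, y in Y (by bilinearity it suffices
   to take products of basis vectors). *)
Definition prodspace (k : fieldType) (U V W : vectType k) (f : U -> V -> W)
  (X : {vspace U}) (Y : {vspace V}) : {vspace W} :=
  <<[seq f x y | x <- vbasis X, y <- vbasis Y]>>%VS.

Section Kahler.
Variables (k : fieldType) (n : nat).

Definition maxA2 (A : {vspace 'rV[k]_n}) : {vspace 'rV[k]_n} :=
  prodspace (@bmul k n) (maxA A) (maxA A).
Definition cotdim (A : {vspace 'rV[k]_n}) : nat :=
  (\dim (maxA A) - \dim (maxA2 A))%N.

(* B ⊗_k B = k[s,t]/(s^n,t^n), as n x n coefficient matrices: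
   P represents sum P_ij s^i t^j. *)
Definition tens (a b : 'rV[k]_n) : 'M[k]_(n, n) := \matrix_(i, j) (a 0 i * b 0 j).

Definition tmul (P Q : 'M[k]_(n, n)) : 'M[k]_(n, n) :=
  \matrix_(i, j) \sum_(i1 < n) \sum_(i2 < n | (i1 + i2)%N == (i : nat))
                 \sum_(j1 < n) \sum_(j2 < n | (j1 + j2)%N == (j : nat))
                    P i1 j1 * Q i2 j2.

Definition tmult (P : 'M[k]_(n, n)) : 'rV[k]_n :=
  \row_(l < n) \sum_(i < n) \sum_(j < n | (i + j)%N == (l : nat)) P i j.

(* A ⊗_k A, realised inside B ⊗_k B (k is a field, so A ⊗ A -> B ⊗ B is injective) *)
Definition tensA (A : {vspace 'rV[k]_n}) : {vspace 'M[k]_(n, n)} :=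
  prodspace tens A A.

(* I_A = ker (A ⊗ A -> A) and its square; Omega_{A/k} = I_A / I_A^2 *)
Definition diagI (A : {vspace 'rV[k]_n}) : {vspace 'M[k]_(n, n)} :=
  (tensA A :&: lker (linfun tmult))%VS.
Definition diagI2 (A : {vspace 'rV[k]_n}) : {vspace 'M[k]_(n, n)} :=
  prodspace tmul (diagI A) (diagI A).

(* The natural map Omega_{A/k} = I_A/I_A^2 -> Omega_{B/k} = I_B/I_B^2,
   x + I_A^2 |-> x + I_B^2, has nonzero kernel. *)
Definition Omega_map_ker_nonzero (A : {vspace 'rV[k]_n}) : Prop :=
  exists x : 'M[k]_(n, n),
    [/\ x \in diagI A, x \notin diagI2 A & x \in diagI2 (fullv : {vspace 'rV[k]_n})].

End Kahler.

(* Main.v *)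
Require Import Defs.
From HB Require Import structures.
From mathcomp Require Import all_boot all_order all_algebra.
From Stdlib Require Import Classical.
From mathcomp Require Import zify ring.
Set Implicit Arguments. Unset Strict Implicit. Unset Printing Implicit Defensive.
Import GRing.Theory.
Local Open Scope ring_scope.


Section B1.
Variable k : fieldType.

Lemma sum_conv (n i : nat) (F : nat -> nat -> k) : (i < n)%N ->
  \sum_(j < n) \sum_(l < n | (j + l == i)%N) F j l = \sum_(j < i.+1) F j (i - j)%N.
Proof.
move=> lt_in.
rewrite (big_ord_widen n (fun j => F j (i - j)%N) lt_in) [RHS]big_mkcond /=.
apply: eq_bigr => j _.
case: (leqP j i) => hji.
  rewrite ltnS hji.
  have hlt : (i - j < n)%N by lia.
  rewrite (big_pred1 (Ordinal hlt)) //= => l.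
  apply/eqP/eqP => h; [by apply: val_inj => /=; lia | by rewrite h /=; lia].
rewrite ltnS leqNgt hji /= big_pred0 // => l; apply/eqP; lia.
Qed.

Variable n : nat.
Implicit Types u v w : 'rV[k]_n.

Definition cf u (i : nat) : k := \sum_(j < n | (j : nat) == i) u 0 j.

Lemma cf_ord u (j : 'I_n) : cf u j = u 0 j.
Proof. by rewrite /cf (big_pred1 j) // => l; rewrite -val_eqE. Qed.

Lemma cf_out u i : (n <= i)%N -> cf u i = 0.
Proof. move=> h; rewrite /cf big_pred0 // => l; apply/eqP; have := ltn_ord l; lia. Qed.

Lemma cf_lin a u v i : cf (a *: u + v) i = a * cf u i + cf v i.
Proof.
rewrite /cf big_distrr -big_split /=; apply: eq_bigr => j _; by rewrite !mxE.
Qed.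

Lemma cfP u v : (forall i, cf u i = cf v i) -> u = v.
Proof. by move=> h; apply/rowP => j; rewrite -!cf_ord h. Qed.

Definition r2p u : {poly k} := \poly_(i < n) cf u i.
Definition p2r (p : {poly k}) : 'rV[k]_n := \row_(i < n) p`_i.

Lemma r2pE u i : (r2p u)`_i = cf u i.
Proof. rewrite coef_poly; case: ltnP => // h; by rewrite cf_out. Qed.

Lemma cf_p2r (p : {poly k}) i : cf (p2r p) i = if (i < n)%N then p`_i else 0.
Proof.
case: ltnP => h; last by rewrite cf_out.
by rewrite -[i]/(nat_of_ord (Ordinal h)) cf_ord mxE.
Qed.

Lemma p2rK u : p2r (r2p u) = u.
Proof. apply: cfP => i; rewrite cf_p2r r2pE; case: ltnP => // h; by rewrite cf_out. Qed.

Lemma bmulE u v : bmul u v = p2r (r2p u * r2p v).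
Proof.
apply/rowP => i; rewrite !mxE coefM.
transitivity (\sum_(j < n) \sum_(l < n | (j + l == i)%N) cf u j * cf v l).
  by apply: eq_bigr => j _; apply: eq_bigr => l _; rewrite !cf_ord.
rewrite (sum_conv (fun j l => cf u j * cf v l)) //; apply: eq_bigr => j _; by rewrite !r2pE.
Qed.

Lemma p2r_truncl (p p' q : {poly k}) : (forall j, (j < n)%N -> p`_j = p'`_j) ->
  p2r (p * q) = p2r (p' * q).
Proof.
move=> h; apply/rowP => i; rewrite !mxE !coefM; apply: eq_bigr => j _.
rewrite h //; have := ltn_ord j; have := ltn_ord i; lia.
Qed.

Lemma p2r_truncr (p q q' : {poly k}) : (forall j, (j < n)%N -> q`_j = q'`_j) ->
  p2r (p * q) = p2r (p * q').
Proof. by move=> h; rewrite mulrC (p2r_truncl _ h) mulrC. Qed.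

Lemma r2p_p2r (p : {poly k}) j : (j < n)%N -> (r2p (p2r p))`_j = p`_j.
Proof. by move=> h; rewrite r2pE cf_p2r h. Qed.

Lemma bmulC u v : bmul u v = bmul v u.
Proof. by rewrite !bmulE mulrC. Qed.

Lemma bmulA u v w : bmul u (bmul v w) = bmul (bmul u v) w.
Proof.
rewrite ![bmul u _]bmulC !bmulE.
rewrite (p2r_truncl _ (r2p_p2r (r2p v * r2p w))).
rewrite (p2r_truncl _ (r2p_p2r (r2p v * r2p u))).
by rewrite -mulrA [r2p w * _]mulrC mulrA.
Qed.

Lemma cf_bone i : (i < n)%N -> cf (bone k n) i = (1 : {poly k})`_i.
Proof.
move=> h.
by rewrite -[i]/(nat_of_ord (Ordinal h)) cf_ord mxE coef1.
Qed.

Lemma cf_spow d i : (i < n)%N -> cf (spow k n d) i = ('X^d : {poly k})`_i.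
Proof.
move=> h.
by rewrite -[i]/(nat_of_ord (Ordinal h)) cf_ord mxE coefXn.
Qed.

Lemma bmul1 u : bmul (bone k n) u = u.
Proof.
rewrite bmulE (p2r_truncl (p' := 1)) ?mul1r ?p2rK // => j hj; by rewrite r2pE cf_bone.
Qed.

Lemma bmulr1 u : bmul u (bone k n) = u.
Proof. by rewrite bmulC bmul1. Qed.

Lemma bmul_spowl d u : bmul (spow k n d) u = p2r ('X^d * r2p u).
Proof. rewrite bmulE; apply: p2r_truncl => j hj; by rewrite r2pE cf_spow. Qed.

Lemma bmul_spow a b : bmul (spow k n a) (spow k n b) = spow k n (a + b).
Proof.
rewrite bmul_spowl (@p2r_truncr _ _ 'X^b); last by move=> j hj; rewrite r2pE cf_spow.
apply: cfP => i; rewrite cf_p2r -exprD.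
case: ltnP => h; first by rewrite cf_spow.
by rewrite cf_out.
Qed.

Lemma r2p_lin a u v : r2p (a *: u + v) = a *: r2p u + r2p v.
Proof. apply/polyP => i; by rewrite coefD coefZ !r2pE cf_lin. Qed.

Lemma p2r_lin a (p q : {poly k}) : p2r (a *: p + q) = a *: p2r p + p2r q.
Proof. apply/rowP => i; by rewrite !mxE coefD coefZ. Qed.

Lemma bmul_linl a u v w : bmul (a *: u + v) w = a *: bmul u w + bmul v w.
Proof. by rewrite !bmulE r2p_lin mulrDl -scalerAl p2r_lin. Qed.

Lemma bmul_linr a u v w : bmul w (a *: u + v) = a *: bmul w u + bmul w v.
Proof. by rewrite ![bmul w _]bmulC bmul_linl. Qed.

Lemma cf_bmul u v i : cf (bmul u v) i = if (i < n)%N then (r2p u * r2p v)`_i else 0.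
Proof. by rewrite bmulE cf_p2r. Qed.

Lemma in_spowBP d u : in_spowB d u <-> (forall i, (i < d)%N -> cf u i = 0).
Proof.
split.
  case=> b ->{u} i hi; rewrite bmul_spowl cf_p2r; case: ltnP => // _.
  by rewrite coefXnM hi.
move=> h.
exists (p2r (\poly_(j < n) cf u (j + d))).
rewrite bmul_spowl (@p2r_truncr _ _ (\poly_(j < n) cf u (j + d))); last first.
  by move=> j hj; rewrite r2p_p2r.
apply: cfP => i; rewrite cf_p2r; case: ltnP => hi; last by rewrite cf_out.
rewrite coefXnM; case: ltnP => hid; first by rewrite h.
rewrite coef_poly; have -> : (i - d + d = i)%N by lia.
by case: ltnP => // ?; lia.
Qed.

End B1.


Ltac lin_step := rewrite big_distrr -big_split /=; apply: eq_bigr => ? _.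

Section W1.
Variable k : fieldType.
Variable n : nat.
Notation W := 'M[k]_(n, n).
Implicit Types P Q : W.

Lemma tmul_linl a P P' Q : tmul (a *: P + P') Q = a *: tmul P Q + tmul P' Q.
Proof.
apply/matrixP => i j; rewrite !mxE; do 4 lin_step; rewrite !mxE; ring.
Qed.

Lemma tmult_lin : linear (@tmult k n).
Proof.
move=> a P Q; apply/rowP => l; rewrite !mxE; do 2 lin_step; by rewrite !mxE.
Qed.

Lemma tmul_tens (a b c d : 'rV[k]_n) :
  tmul (tens a b) (tens c d) = tens (bmul a c) (bmul b d).
Proof.
apply/matrixP => i j; rewrite !mxE big_distrl /=; apply: eq_bigr => i1 _.
rewrite big_distrl /=; apply: eq_bigr => i2 _.
rewrite big_distrr /=; apply: eq_bigr => j1 _.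
rewrite big_distrr /=; apply: eq_bigr => j2 _.
rewrite !mxE; ring.
Qed.

Lemma tmult_tens (a b : 'rV[k]_n) : tmult (tens a b) = bmul a b.
Proof.
apply/rowP => l; rewrite !mxE; apply: eq_bigr => i _; apply: eq_bigr => j _.
by rewrite !mxE.
Qed.

Lemma tens_linl c (a a' b : 'rV[k]_n) : tens (c *: a + a') b = c *: tens a b + tens a' b.
Proof. apply/matrixP => i j; rewrite !mxE; ring. Qed.

Lemma tens_linr c (a b b' : 'rV[k]_n) : tens a (c *: b + b') = c *: tens a b + tens a b'.
Proof. apply/matrixP => i j; rewrite !mxE; ring. Qed.

Definition cf2 P (i j : nat) : k :=
  \sum_(a < n | (a : nat) == i) \sum_(b < n | (b : nat) == j) P a b.

Lemma cf2_ord P (a b : 'I_n) : cf2 P a b = P a b.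
Proof.
have e1 : forall c l : 'I_n, ((l:nat) == c) = (l == c) by [].
by rewrite /cf2 (big_pred1 a (e1 a)) (big_pred1 b (e1 b)).
Qed.

Lemma cf2_out P i j : (n <= i)%N || (n <= j)%N -> cf2 P i j = 0.
Proof.
case/orP => h; rewrite /cf2.
  by rewrite big_pred0 // => l; apply/eqP; have := ltn_ord l; lia.
rewrite big1 // => a _; rewrite big_pred0 // => l; apply/eqP; have := ltn_ord l; lia.
Qed.

Definition m2 P : {poly {poly k}} := \poly_(i < n) \poly_(j < n) cf2 P i j.
Definition t2 (p : {poly {poly k}}) : W := \matrix_(i < n, j < n) (p`_i)`_j.

Lemma m2E P i j : ((m2 P)`_i)`_j = cf2 P i j.
Proof.
rewrite coef_poly; case: ltnP => hi; last by rewrite coef0 cf2_out ?hi.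
rewrite coef_poly; case: ltnP => hj //; by rewrite cf2_out ?hj ?orbT.
Qed.

Lemma tmulE P Q : tmul P Q = t2 (m2 P * m2 Q).
Proof.
apply/matrixP => i j; rewrite !mxE coefM coef_sum.
transitivity (\sum_(i1 < n) \sum_(i2 < n | (i1 + i2 == i)%N)
   \sum_(j1 < n) \sum_(j2 < n | (j1 + j2 == j)%N) cf2 P i1 j1 * cf2 Q i2 j2).
  by do 4 (apply: eq_bigr => ? _); rewrite !cf2_ord.
transitivity (\sum_(i1 < n) \sum_(i2 < n | (i1 + i2 == i)%N)
   \sum_(j1 < j.+1) cf2 P i1 j1 * cf2 Q i2 (j - j1)%N).
  do 2 (apply: eq_bigr => ? _).
  exact: (sum_conv (fun a b => cf2 P _ a * cf2 Q _ b) (ltn_ord j)).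
rewrite (sum_conv (fun a b => \sum_(j1 < j.+1) cf2 P a j1 * cf2 Q b (j - j1)%N) (ltn_ord i)).
apply: eq_bigr => i1 _; rewrite coefM; apply: eq_bigr => j1 _; by rewrite !m2E.
Qed.

Lemma t2_truncl (p p' q : {poly {poly k}}) :
  (forall a b, (a < n)%N -> (b < n)%N -> (p`_a)`_b = (p'`_a)`_b) ->
  t2 (p * q) = t2 (p' * q).
Proof.
move=> h; apply/matrixP => i j; rewrite !mxE !coefM !coef_sum; apply: eq_bigr => a _.
rewrite !coefM; apply: eq_bigr => b _; rewrite h //.
  have := ltn_ord a; have := ltn_ord i; lia.
have := ltn_ord b; have := ltn_ord j; lia.
Qed.

Lemma m2t2 p a b : (a < n)%N -> (b < n)%N -> ((m2 (t2 p))`_a)`_b = (p`_a)`_b.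
Proof.
move=> ha hb; rewrite m2E -[a]/(nat_of_ord (Ordinal ha)) -[b]/(nat_of_ord (Ordinal hb)).
by rewrite cf2_ord mxE.
Qed.

Lemma tmulC P Q : tmul P Q = tmul Q P.
Proof. by rewrite !tmulE mulrC. Qed.

Lemma tmulA P Q R : tmul P (tmul Q R) = tmul (tmul P Q) R.
Proof.
rewrite ![tmul P _]tmulC !tmulE.
rewrite (t2_truncl _ (m2t2 (m2 Q * m2 R))).
rewrite (t2_truncl _ (m2t2 (m2 Q * m2 P))).
by rewrite -mulrA [m2 R * _]mulrC mulrA.
Qed.

Lemma tmul_linr a P P' Q : tmul Q (a *: P + P') = a *: tmul Q P + tmul Q P'.
Proof. by rewrite ![tmul Q _]tmulC tmul_linl. Qed.

Lemma tmul_lin Q : linear (tmul Q).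
Proof. move=> a P P'; exact: tmul_linr. Qed.

End W1.

HB.instance Definition _ (k : fieldType) (n : nat) :=
  GRing.isLinear.Build k 'M[k]_(n, n) 'rV[k]_n _ (@tmult k n) (@tmult_lin k n).

HB.instance Definition _ (k : fieldType) (n : nat) (Q : 'M[k]_(n, n)) :=
  GRing.isLinear.Build k 'M[k]_(n, n) 'M[k]_(n, n) _ (@tmul k n Q) (@tmul_lin k n Q).


Section Gen.
Variable k : fieldType.

Lemma span_ind (V : vectType k) (X : seq V) (Pr : V -> Prop) :
  Pr 0 -> (forall a u v, Pr u -> Pr v -> Pr (a *: u + v)) ->
  (forall x, x \in X -> Pr x) -> forall v, v \in <<X>>%VS -> Pr v.
Proof.
move=> P0 Pc PX v Hv.
have -> := @coord_span _ _ _ (in_tuple X) v Hv.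
apply: (big_ind Pr) => //.
  by move=> x y Px Py; have := Pc 1 x y Px Py; rewrite scale1r.
move=> i _; have := Pc (coord (in_tuple X) i v) _ 0 (PX _ (mem_nth 0 (ltn_ord i))) P0.
by rewrite addr0.
Qed.

Lemma prod_ind (U V Wt : vectType k) (f : U -> V -> Wt) (X : {vspace U}) (Y : {vspace V}) (Pr : Wt -> Prop) :
  Pr 0 -> (forall a u v, Pr u -> Pr v -> Pr (a *: u + v)) ->
  (forall x y, x \in X -> y \in Y -> Pr (f x y)) ->
  forall z, z \in prodspace f X Y -> Pr z.
Proof.
move=> P0 Pc Pf; apply: span_ind => // z /allpairsP [[x y] /= [hx hy ->]].
by apply: Pf; apply: vbasis_mem.
Qed.

Lemma prod_mem (U V Wt : vectType k) (f : U -> V -> Wt) (X : {vspace U}) (Y : {vspace V}) x y :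
  (forall a u u' v, f (a *: u + u') v = a *: f u v + f u' v) ->
  (forall a u v v', f u (a *: v + v') = a *: f u v + f u v') ->
  x \in X -> y \in Y -> f x y \in prodspace f X Y.
Proof.
move=> hl hr hx hy.
have f0l : forall v, f 0 v = 0.
  by move=> v; have := hl (-1) 0 0 v; rewrite scaler0 addr0 scaleN1r addNr.
have f0r : forall u, f u 0 = 0.
  by move=> u; have := hr (-1) u 0 0; rewrite scaler0 addr0 scaleN1r addNr.
have hx' : x \in <<vbasis X>>%VS by rewrite (span_basis (vbasisP X)).
have hy' : y \in <<vbasis Y>>%VS by rewrite (span_basis (vbasisP Y)).
clear hx hy; move: x hx'; apply: span_ind.
- by rewrite f0l mem0v.
- by move=> a u u' hu hu'; rewrite hl memvD ?memvZ.
move=> x hx; move: y hy'; apply: span_ind.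
- by rewrite f0r mem0v.
- by move=> a u u' hu hu'; rewrite hr memvD ?memvZ.
move=> y hy; apply: memv_span; apply/allpairsP; by exists (x, y).
Qed.

Lemma dim_quot (V : vectType k) (U S : {vspace V}) (f : 'End(V)) :
  (\dim U + \dim S = \dim (f @: U + S) + \dim (U :&: f @^-1: S))%N.
Proof.
set K := (U :&: f @^-1: S)%VS.
have e1 : (f @: U :&: S = f @: K)%VS.
  apply/vspaceP => w; apply/idP/idP.
    case/memv_capP => /memv_imgP [u hu ->] hs.
    by apply: memv_img; rewrite memv_cap hu -memv_preim.
  case/memv_imgP => u; rewrite /K memv_cap -memv_preim => /andP [hu hs] ->.
  by rewrite memv_cap hs memv_img.
have e2 : (K :&: lker f = U :&: lker f)%VS.
  apply/vspaceP => w; rewrite !memv_cap -memv_preim memv_ker.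
  by case: (f w == 0) /eqP => [->|]; rewrite ?mem0v ?andbT ?andbF.
have := dimv_sum_cap (f @: U) S; rewrite e1.
have := limg_ker_dim f U; have := limg_ker_dim f K; rewrite e2.
lia.
Qed.

Lemma lowerb (V : vectType k) (I : finType) (P : pred I) (x : I -> V)
  (phi : I -> V -> k) (d : I -> k) (Z U : {vspace V}) :
  (forall i a u v, phi i (a *: u + v) = a * phi i u + phi i v) ->
  (forall i j, P i -> P j -> phi i (x j) = (i == j)%:R * d j) ->
  (forall i, P i -> d i != 0) ->
  (forall i, P i -> x i \in U) -> (Z <= U)%VS ->
  (forall i z, P i -> z \in Z -> phi i z = 0) ->
  (\dim Z + #|P| <= \dim U)%N.
Proof.
move=> hlin hdual hd hxU hZU hZ.
have phi0 : forall i, phi i 0 = 0.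
  by move=> i; have := hlin i (-1) 0 0; rewrite scaler0 addr0 mulN1r addNr.
have phiD : forall i, {morph phi i : u v / u + v >-> u + v}.
  by move=> i u v; have := hlin i 1 u v; rewrite scale1r mul1r.
set T := [tuple x (enum_val j) | j < #|P|].
have Ti : forall j : 'I_#|P|, T`_j = x (enum_val j).
  by move=> j; rewrite -tnth_nth tnth_mktuple.
have key : forall (c : 'I_#|P| -> k) l,
    phi (enum_val l) (\sum_j c j *: T`_j) = c l * d (enum_val l).
  move=> c l; rewrite (big_morph (phi (enum_val l)) (phiD _) (phi0 _)).
  rewrite (bigD1 l) //= big1 ?addr0.
    rewrite -[c l *: _]addr0 hlin phi0 addr0 Ti (hdual _ _ (enum_valP l) (enum_valP l)).
    by rewrite eqxx mul1r.
  move=> j hj; rewrite -[c j *: _]addr0 hlin phi0 addr0 Ti (hdual _ _ (enum_valP l) (enum_valP j)).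
  by rewrite (inj_eq enum_val_inj) eq_sym (negbTE hj) mul0r mulr0.
have hfree : free T.
  apply/freeP => c hc l; have := key c l; rewrite hc phi0 => /esym /eqP.
  by rewrite mulf_eq0 (negbTE (hd _ (enum_valP l))) orbF => /eqP.
have hcap : (Z :&: <<T>> = 0)%VS.
  apply/eqP; rewrite -subv0; apply/subvP => v /memv_capP [hvZ hvT].
  rewrite memv0; have hv := coord_span hvT; rewrite hv big1 // => j _.
  have := key (fun j => coord T j v) j; rewrite -hv (hZ _ _ (enum_valP j) hvZ) => /esym /eqP.
  rewrite mulf_eq0 (negbTE (hd _ (enum_valP j))) orbF => /eqP ->; by rewrite scale0r.
have hdimT : \dim <<T>> = #|P| by move: hfree; rewrite /free size_tuple => /eqP.
have hsub : (Z + <<T>> <= U)%VS.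
  rewrite subv_add hZU /=; apply/span_subvP => v /tnthP [j ->].
  rewrite tnth_map; apply: hxU; exact: enum_valP.
have := dimvS hsub; have := dimv_sum_cap Z <<T>>%VS; rewrite hcap dimv0 hdimT.
lia.
Qed.

End Gen.


Section Fun.
Variable k : fieldType.
Variable n : nat.
Notation B := 'rV[k]_n.
Notation W := 'M[k]_(n, n).

Definition app (c : 'cV[k]_n) (u : B) : k := (u *m c) 0 0.
Definition pair (c d : 'cV[k]_n) (P : W) : k := (c^T *m P *m d) 0 0.
Definition eps : 'cV[k]_n := \col_i ((i : nat) == 0%N)%:R.

Lemma app_lin c a u v : app c (a *: u + v) = a * app c u + app c v.
Proof. by rewrite /app mulmxDl -scalemxAl !mxE. Qed.

Lemma pair_lin c d a P Q : pair c d (a *: P + Q) = a * pair c d P + pair c d Q.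
Proof. by rewrite /pair mulmxDr mulmxDl -scalemxAr -scalemxAl !mxE. Qed.

Lemma pair0 c d : pair c d 0 = 0.
Proof. by rewrite /pair mulmx0 mul0mx mxE. Qed.

Lemma app0 c : app c 0 = 0.
Proof. by rewrite /app mul0mx mxE. Qed.

Lemma tens_mx (x y : B) : tens x y = x^T *m y.
Proof. by apply/matrixP => i j; rewrite !mxE big_ord1 !mxE. Qed.

Lemma pair_tens c d x y : pair c d (tens x y) = app c x * app d y.
Proof.
rewrite /pair /app tens_mx mulmxA -trmx_mul -mulmxA mxE big_ord1 mxE.
by [].
Qed.

Lemma app_eps u : app eps u = cf u 0.
Proof.
rewrite /app mxE /cf [RHS]big_mkcond /=; apply: eq_bigr => j _; rewrite mxE.
by case: eqP => _; rewrite ?mulr1 ?mulr0.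
Qed.

Lemma app_eps_bmul u v : app eps (bmul u v) = app eps u * app eps v.
Proof.
rewrite !app_eps cf_bmul; case: ltnP => h.
  by rewrite coefM big_ord1 !r2pE.
by rewrite !cf_out ?mul0r.
Qed.

Lemma app_eps_bone : (0 < n)%N -> app eps (bone k n) = 1.
Proof. by move=> h; rewrite app_eps (@cf_bone k n 0%N h) coef1. Qed.

Lemma B_decomp (u : B) : u = \sum_(a < n) u 0 a *: spow k n a.
Proof.
apply/rowP => i; rewrite summxE (bigD1 i) //= big1 ?addr0.
  by rewrite !mxE eqxx mulr1.
by move=> j hj; rewrite !mxE; case: eqP => h; [case/eqP: hj; apply: val_inj|rewrite mulr0].
Qed.

Lemma W_decomp (P : W) :
  P = \sum_(a < n) \sum_(b < n) P a b *: tens (spow k n a) (spow k n b).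
Proof.
apply/matrixP => i j; rewrite summxE (bigD1 i) //= [X in _ + X]big1 ?addr0.
  rewrite summxE (bigD1 j) //= [X in _ + X]big1 ?addr0.
    by rewrite !mxE !eqxx mulr1 mulr1.
  move=> b hb; rewrite !mxE; case: (eqP (x := (j : nat))) => h; last by rewrite !mulr0.
  by case/eqP: hb; apply: val_inj.
move=> a ha; rewrite summxE big1 // => b _; rewrite !mxE.
case: (eqP (x := (i : nat))) => h; last by rewrite mul0r mulr0.
by case/eqP: ha; apply: val_inj.
Qed.

Lemma W_all (P : W) : P \in tensA (fullv : {vspace B}).
Proof.
rewrite (W_decomp P); apply: memv_suml => a _; apply: memv_suml => b _.
apply: memvZ; apply: prod_mem; rewrite ?memvf //.
  by move=> *; rewrite tens_linl.
by move=> *; rewrite tens_linr.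
Qed.

Lemma tens_mem (A : {vspace B}) x y : x \in A -> y \in A -> tens x y \in tensA A.
Proof.
move=> hx hy; apply: prod_mem => //.
  by move=> *; rewrite tens_linl.
by move=> *; rewrite tens_linr.
Qed.

Definition cc (P : W) := pair eps eps P.

Lemma MI4 P : cc P = app eps (tmult P).
Proof.
have := W_all P; move: P; apply: prod_ind.
- by rewrite /cc pair0 raddf0 app0.
- by move=> a u v hu hv; rewrite /cc pair_lin tmult_lin app_lin -hu -hv.
by move=> x y _ _; rewrite /cc pair_tens tmult_tens app_eps_bmul.
Qed.

Section Der.
Variable A : {vspace B}.

Definition is_der (l : 'cV[k]_n) := forall f g, f \in A -> g \in A ->
  app l (bmul f g) = app eps f * app l g + app eps g * app l f.

Lemma MI1 l m : is_der l -> is_der m -> forall x y, x \in tensA A -> y \in tensA A ->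
  pair l m (tmul x y) = cc x * pair l m y + pair eps m x * pair l eps y
     + pair l eps x * pair eps m y + cc y * pair l m x.
Proof.
move=> dl dm x y hx hy; move: x hx; apply: prod_ind.
- by rewrite tmulC raddf0 /cc !pair0; ring.
- move=> a u v hu hv; rewrite tmul_linl /cc !pair_lin hu hv /cc; ring.
move=> f g hf hg; move: y hy; apply: prod_ind.
- by rewrite raddf0 /cc !pair0; ring.
- move=> a u v hu hv; rewrite tmul_linr /cc !pair_lin hu hv /cc; ring.
move=> u v hu hv; rewrite tmul_tens /cc !pair_tens dl // dm //; ring.
Qed.

Lemma MI2 l : is_der l -> forall x y, x \in tensA A -> y \in tensA A ->
  pair l eps (tmul x y) = cc x * pair l eps y + pair l eps x * cc y.
Proof.
move=> dl x y hx hy; move: x hx; apply: prod_ind.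
- by rewrite tmulC raddf0 /cc !pair0; ring.
- move=> a u v hu hv; rewrite tmul_linl /cc !pair_lin hu hv /cc; ring.
move=> f g hf hg; move: y hy; apply: prod_ind.
- by rewrite raddf0 /cc !pair0; ring.
- move=> a u v hu hv; rewrite tmul_linr /cc !pair_lin hu hv /cc; ring.
move=> u v hu hv; rewrite tmul_tens /cc !pair_tens dl // !app_eps_bmul; ring.
Qed.

Lemma MI3 l : is_der l -> forall x, x \in tensA A ->
  pair eps l x + pair l eps x = app l (tmult x).
Proof.
move=> dl; apply: prod_ind.
- by rewrite !pair0 raddf0 app0 addr0.
- move=> a u v hu hv; rewrite !pair_lin tmult_lin app_lin -hu -hv; ring.
move=> f g hf hg; rewrite !pair_tens tmult_tens dl //; ring.
Qed.

End Der.
End Fun.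


Section Sub.
Variable k : fieldType.
Variable n : nat.
Notation B := 'rV[k]_n.
Notation W := 'M[k]_(n, n).

Lemma bmul0 (u : B) : bmul 0 u = 0.
Proof. by have := bmul_linl (-1) 0 0 u; rewrite scaler0 addr0 scaleN1r addNr. Qed.

Lemma bmulr0 (u : B) : bmul u 0 = 0.
Proof. by rewrite bmulC bmul0. Qed.

Lemma tmul0 (P : W) : tmul 0 P = 0.
Proof. by rewrite tmulC raddf0. Qed.

Lemma diagIP (A : {vspace B}) x : reflect (x \in tensA A /\ tmult x = 0) (x \in diagI A).
Proof.
rewrite /diagI memv_cap memv_ker lfunE /=; apply: (iffP andP) => [[h /eqP]|[h ->]] //.
Qed.

Lemma tmult_mul (x y : W) : tmult (tmul x y) = bmul (tmult x) (tmult y).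
Proof.
have := W_all y; have := W_all x; move: x; apply: prod_ind.
- by move=> _; rewrite tmul0 raddf0 bmul0.
- by move=> a u v hu hv hy; rewrite tmul_linl !tmult_lin bmul_linl hu ?hv.
move=> f g _ _ hy; move: y hy; apply: prod_ind.
- by rewrite raddf0 raddf0 bmulr0.
- by move=> a u v hu hv; rewrite tmul_linr !tmult_lin bmul_linr hu hv.
move=> u v _ _; rewrite tmul_tens !tmult_tens.
by rewrite !bmulA -[bmul (bmul f u) g]bmulA [bmul u g]bmulC bmulA.
Qed.

Lemma tensA_mul (A : {vspace B}) : is_subalgebra A ->
  forall x y, x \in tensA A -> y \in tensA A -> tmul x y \in tensA A.
Proof.
move=> [h1 hm] x y hx hy; move: x hx; apply: prod_ind.
- by rewrite tmul0 mem0v.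
- by move=> a u v hu hv; rewrite tmul_linl memvD ?memvZ.
move=> f g hf hg; move: y hy; apply: prod_ind.
- by rewrite raddf0 mem0v.
- by move=> a u v hu hv; rewrite tmul_linr memvD ?memvZ.
by move=> u v hu hv; rewrite tmul_tens tens_mem ?hm.
Qed.

Lemma diagI_mul (A : {vspace B}) : is_subalgebra A ->
  forall x y, x \in diagI A -> y \in tensA A -> tmul x y \in diagI A.
Proof.
move=> hA x y /diagIP [hx hx0] hy; apply/diagIP; split; first exact: tensA_mul.
by rewrite tmult_mul hx0 bmul0.
Qed.

Lemma diagI2_sub (A : {vspace B}) : is_subalgebra A -> (diagI2 A <= diagI A)%VS.
Proof.
move=> hA; apply/subvP; apply: prod_ind.
- exact: mem0v.
- by move=> a u v hu hv; rewrite memvD ?memvZ.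
by move=> u v hu hv; apply: diagI_mul => //; case/diagIP: hv.
Qed.

Lemma subalg_full : is_subalgebra (fullv : {vspace B}).
Proof. by split=> *; rewrite memvf. Qed.

Lemma diagI_full x : (x \in diagI (fullv : {vspace B})) = (tmult x == 0).
Proof.
by apply/diagIP/eqP => [[]|h] //; split => //; exact: W_all.
Qed.

Lemma diagI_sub (A : {vspace B}) : (diagI A <= diagI fullv)%VS.
Proof. by apply/subvP => x /diagIP [_ h]; rewrite diagI_full h. Qed.

Lemma tmul_mem2 (A : {vspace B}) u v : u \in diagI A -> v \in diagI A ->
  tmul u v \in diagI2 A.
Proof.
move=> hu hv; apply: prod_mem => //.
  by move=> *; rewrite tmul_linl.
by move=> *; rewrite tmul_linr.
Qed.

Lemma diagI2_subB (A : {vspace B}) : (diagI2 A <= diagI2 fullv)%VS.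
Proof.
apply/subvP; apply: prod_ind.
- exact: mem0v.
- by move=> a u v hu hv; rewrite memvD ?memvZ.
move=> u v hu hv; apply: tmul_mem2; exact: (subvP (diagI_sub A)).
Qed.

Definition Lmap (T0 : W) : 'End(W) := linfun (tmul T0).

Lemma LmapE T0 x : Lmap T0 x = tmul T0 x.
Proof. by rewrite /Lmap lfunE. Qed.

Lemma Lmap_B2 T0 : (Lmap T0 @: diagI2 fullv <= diagI2 fullv)%VS.
Proof.
apply/subvP => w /memv_imgP [x hx ->]; rewrite LmapE; move: x hx; apply: prod_ind.
- by rewrite raddf0 mem0v.
- by move=> a u v hu hv; rewrite tmul_linr memvD ?memvZ.
move=> u v hu hv; rewrite tmulA; apply: tmul_mem2 => //.
by rewrite tmulC; apply: diagI_mul => //; [exact: subalg_full | exact: W_all].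
Qed.

Lemma Lmap_A (A : {vspace B}) T0 : is_subalgebra A -> T0 \in tensA A ->
  (Lmap T0 @: diagI A <= diagI A)%VS.
Proof.
move=> hA hT; apply/subvP => w /memv_imgP [x hx ->]; rewrite LmapE tmulC.
by apply: diagI_mul.
Qed.

End Sub.


Section Upper.
Variable k : fieldType.
Variable n : nat.
Notation B := 'rV[k]_n.
Notation W := 'M[k]_(n, n).
Notation bo := (bone k n).
Notation sp := (spow k n).

Lemma tmulBl (P P' Q : W) : tmul (P - P') Q = tmul P Q - tmul P' Q.
Proof.
have -> : P - P' = (-1) *: P' + P by rewrite scaleN1r addrC.
by rewrite tmul_linl scaleN1r addrC.
Qed.
Lemma tmulBr (P P' Q : W) : tmul Q (P - P') = tmul Q P - tmul Q P'.
Proof.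
have -> : P - P' = (-1) *: P' + P by rewrite scaleN1r addrC.
by rewrite tmul_linr scaleN1r addrC.
Qed.

Lemma tens0l (y : B) : tens 0 y = 0.
Proof. by apply/matrixP => i j; rewrite !mxE mul0r. Qed.

Lemma cf0 i : cf (0 : B) i = 0.
Proof. by rewrite /cf big1 // => j _; rewrite mxE. Qed.

Definition Qf (x y : B) : W := tens (bmul x y) bo - tens x y.
Definition Df (z : B) : W := tens z bo - tens bo z.

Lemma Qf_lin1 a x x' y : Qf (a *: x + x') y = a *: Qf x y + Qf x' y.
Proof. rewrite /Qf bmul_linl !tens_linl; apply/matrixP => i j; rewrite !mxE; ring. Qed.

Lemma Qf_lin2 a x y y' : Qf x (a *: y + y') = a *: Qf x y + Qf x y'.
Proof. rewrite /Qf bmul_linr tens_linl tens_linr; apply/matrixP => i j; rewrite !mxE; ring. Qed.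

Lemma Qf_IB x y : Qf x y \in diagI (fullv : {vspace B}).
Proof. by rewrite diagI_full /Qf raddfB /= !tmult_tens bmulr1 subrr. Qed.

Lemma Df_IB z : Df z \in diagI (fullv : {vspace B}).
Proof. by rewrite diagI_full /Df raddfB /= !tmult_tens bmulr1 bmul1 subrr. Qed.

Lemma U2 x y z :
  Qf x (bmul y z) = Qf (bmul x y) z + Qf (bmul x z) y - tmul (Qf x y) (Df z).
Proof.
rewrite /Qf /Df !tmulBl !tmulBr !tmul_tens !bmul1 !bmulr1.
have e1 : bmul (bmul x z) y = bmul (bmul x y) z by rewrite -!bmulA [bmul z y]bmulC.
rewrite e1 bmulA; apply/matrixP => i j; rewrite !mxE; ring.
Qed.

Lemma U3 t w y : Qf (bmul t w) y = tmul (tens t bo) (Qf w y).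
Proof.
by rewrite /Qf tmulBr !tmul_tens ?bmul1 ?bmulr1 bmulA.
Qed.

Variable t : B.
Variable e : nat.
Hypothesis ht0 : forall i, (i < e)%N -> cf t i = 0.
Hypothesis hte : cf t e != 0.

Definition Dsp : {vspace B} :=
  (<<[seq sp l | l <- iota 0 e]>> + <<[seq bmul t (sp l) | l <- iota 0 n]>>)%VS.

Lemma cf_spow_lt d i : (i < n)%N -> cf (sp d) i = (i == d)%:R.
Proof. by move=> h; rewrite cf_spow // coefXn. Qed.

Lemma cf_tshift m i : cf (bmul t (sp m)) i =
  if (i < n)%N then (if (i < m)%N then 0 else cf t (i - m)) else 0.
Proof. by rewrite bmulC bmul_spowl cf_p2r coefXnM r2pE. Qed.

Lemma Dsp_all x : x \in Dsp.
Proof.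
suff H : forall d x, (forall i, (i < n - d)%N -> cf x i = 0) -> x \in Dsp.
  by apply: (H n) => i; rewrite subnn.
elim=> [|d IH] {}x hx.
  have -> : x = 0.
    apply: cfP => i; rewrite cf0; case: (ltnP i n) => h; first by apply: hx; lia.
    by rewrite cf_out.
  exact: mem0v.
case: (leqP n d) => hnd.
  by apply: IH => i hi; apply: hx; lia.
set j := (n - d.+1)%N.
have hj : (j < n)%N by lia.
pose g := if (j < e)%N then sp j else (cf t e)^-1 *: bmul t (sp (j - e)).
have hg : g \in Dsp.
  rewrite /g; case: ltnP => hje.
    apply: (subvP (addvSl _ _)); apply: memv_span; apply: map_f; rewrite mem_iota; lia.
  apply: memvZ; apply: (subvP (addvSr _ _)); apply: memv_span; apply: map_f.
  rewrite mem_iota; lia.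
have hgj : cf g j = 1.
  rewrite /g; case: ltnP => hje; first by rewrite cf_spow_lt // eqxx.
  rewrite -[_ *: _]addr0 cf_lin cf0 addr0 cf_tshift hj ifF; last by apply/negbTE; lia.
  have -> : (j - (j - e) = e)%N by lia.
  by rewrite mulVf.
have hgi : forall i, (i < j)%N -> cf g i = 0.
  move=> i hi; rewrite /g; case: ltnP => hje.
    by rewrite cf_spow_lt; [case: eqP => //; lia | lia].
  rewrite -[_ *: _]addr0 cf_lin cf0 addr0 cf_tshift ifT; last by lia.
  case: ifP => h; first by rewrite mulr0.
  by rewrite (ht0 (i := (i - (j - e))%N)) ?mulr0 //; move/negbT: h; lia.
have hx' : x - cf x j *: g \in Dsp.
  apply: IH => i hi.
  have -> : x - cf x j *: g = (- cf x j) *: g + x by rewrite addrC scaleNr.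
  rewrite cf_lin; case: (ltnP i j) => hij.
    by rewrite (hgi i hij) (hx i) ?mulr0 ?add0r //; lia.
  have -> : i = j by lia.
  by rewrite hgj mulr1 addNr.
by have := memvD hx' (memvZ (cf x j) hg); rewrite subrK.
Qed.

Let T0 := tens t bo.
Let L := Lmap T0.
Let IB := diagI (fullv : {vspace B}).
Let IB2 := diagI2 (fullv : {vspace B}).
Let E := <<[seq Qf (sp l) (sp 1) | l <- iota 0 e]>>%VS.
Let Z := (E + (L @: IB + IB2))%VS.

Lemma Qf0 y : Qf 0 y = 0.
Proof. by have := Qf_lin1 (-1) 0 0 y; rewrite scaler0 addr0 scaleN1r addNr. Qed.

Lemma Qf0r x : Qf x 0 = 0.
Proof. by have := Qf_lin2 (-1) x 0 0; rewrite scaler0 addr0 scaleN1r addNr. Qed.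

Lemma U5 x : Qf x (sp 1) \in Z.
Proof.
have /memv_addP [x1 hx1 [x2 hx2 ->]] := Dsp_all x.
have -> : x1 + x2 = 1 *: x1 + x2 by rewrite scale1r.
rewrite Qf_lin1 scale1r; apply: memvD.
- move: x1 hx1; apply: span_ind.
  + by rewrite Qf0 mem0v.
  + by move=> a u v hu hv; rewrite Qf_lin1 memvD ?memvZ.
  + move=> v /mapP [l hl ->]; apply: (subvP (addvSl _ _)); apply: memv_span.
    exact: map_f.
- move: x2 hx2; apply: span_ind.
  + by rewrite Qf0 mem0v.
  + by move=> a u v hu hv; rewrite Qf_lin1 memvD ?memvZ.
  + move=> v /mapP [l hl ->]; rewrite U3; apply: (subvP (addvSr _ _)).
    apply: (subvP (addvSl _ _)).
    have := memv_img L (Qf_IB (sp l) (sp 1)); by rewrite /L LmapE.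
Qed.

Lemma U6 b x : Qf x (sp b) \in Z.
Proof.
elim: b x => [|b IH] x.
  have -> : sp 0 = bo by [].
  by rewrite /Qf bmulr1 subrr mem0v.
have -> : sp b.+1 = bmul (sp b) (sp 1) by rewrite bmul_spow addn1.
rewrite U2; apply: memvB; first by apply: memvD; [exact: U5 | exact: IH].
apply: (subvP (addvSr _ _)); apply: (subvP (addvSr _ _)).
by apply: tmul_mem2; [exact: Qf_IB | exact: Df_IB].
Qed.

Lemma U7 x y : Qf x y \in Z.
Proof.
rewrite (B_decomp y); apply: (big_ind (fun v => Qf x v \in Z)).
- by rewrite Qf0r mem0v.
- by move=> u v hu hv; have := Qf_lin2 1 x u v; rewrite !scale1r => ->; exact: memvD.
move=> a _; have := Qf_lin2 (y 0 a) x (sp a) 0; rewrite !addr0 Qf0r addr0 => ->.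
exact: memvZ (U6 _ _).
Qed.

Lemma U8 P : P - tens (tmult P) bo \in Z.
Proof.
have := W_all P; move: P; apply: prod_ind.
- by rewrite raddf0 tens0l subrr mem0v.
- move=> a u v hu hv; rewrite tmult_lin tens_linl.
  have -> : a *: u + v - (a *: tens (tmult u) bo + tens (tmult v) bo) =
    a *: (u - tens (tmult u) bo) + (v - tens (tmult v) bo).
    by rewrite scalerBr opprD addrACA.
  by rewrite memvD ?memvZ.
move=> f g _ _; rewrite tmult_tens.
have -> : tens f g - tens (bmul f g) bo = - Qf f g by rewrite /Qf opprB.
by rewrite memvN U7.
Qed.

Lemma IB_Z : (IB <= Z)%VS.
Proof.
apply/subvP => x; rewrite /IB diagI_full => /eqP h.
by have := U8 x; rewrite h tens0l subr0.
Qed.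

Lemma upper : (\dim IB <= e + \dim (L @: IB + IB2))%N.
Proof.
have h1 := dimvS IB_Z.
have h2 := (dimv_add_leqif E (L @: IB + IB2)%VS).1.
have h3 : (\dim E <= e)%N.
  by rewrite (leq_trans (dim_span _)) // size_map size_iota.
apply: (leq_trans h1); apply: (leq_trans h2); by rewrite leq_add2r.
Qed.

End Upper.


Lemma lin_sum (k : fieldType) (V : vectType k) (phi : V -> k) (I : finType)
  (c : I -> k) (u : I -> V) :
  (forall a x y, phi (a *: x + y) = a * phi x + phi y) ->
  phi (\sum_i c i *: u i) = \sum_i c i * phi (u i).
Proof.
move=> hlin.
have phi0 : phi 0 = 0.
  by have := hlin (-1) 0 0; rewrite scaler0 addr0 mulN1r addNr.
have phiD : {morph phi : x y / x + y >-> x + y}.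
  by move=> x y; have := hlin 1 x y; rewrite scale1r mul1r.
rewrite (big_morph phi phiD phi0); apply: eq_bigr => i _.
by rewrite -[_ *: _]addr0 hlin phi0 addr0.
Qed.

Lemma chain3 (k : fieldType) (V : vectType k) (L : 'End(V)) (IA IA2 IB IB2 : {vspace V}) :
  (IA <= IB)%VS -> (IA2 <= IB2)%VS -> (IB2 <= IB)%VS -> (L @: IB2 <= IB2)%VS ->
  (forall x, x \in IA -> x \in IB2 -> x \in IA2) ->
  (\dim (IA :&: L @^-1: IA2) + \dim IB2 <= \dim (IB :&: L @^-1: IB2) + \dim IA2)%N.
Proof.
move=> hAB hA2 hB2 hL H.
set KA := (IA :&: L @^-1: IA2)%VS; set KB := (IB :&: L @^-1: IB2)%VS.
have s1 : (KA + IB2 <= KB)%VS.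
  rewrite subv_add; apply/andP; split; apply/subvP => x.
    rewrite !memv_cap -!memv_preim => /andP [h1 h2].
    by rewrite (subvP hAB) // (subvP hA2).
  move=> hx; rewrite memv_cap -memv_preim (subvP hB2) //=.
  by apply: (subvP hL); apply: memv_img.
have s2 : (KA :&: IB2 <= IA2)%VS.
  apply/subvP => x; rewrite !memv_cap -memv_preim => /andP [/andP [h1 _] h2].
  exact: H.
have := dimv_sum_cap KA IB2; have := dimvS s1; have := dimvS s2; lia.
Qed.

Lemma arith (dIA dIA2 dLA dKA dIB dIB2 dLB dKB e N : nat) :
  (dIA + dIA2 = dLA + dKA -> dIB + dIB2 = dLB + dKB -> dKA + dIB2 <= dKB + dIA2 ->
  dIB <= e + dLB -> dLA + N <= dIA -> N <= e)%N.
Proof. lia. Qed.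

Lemma count_pairs N : #|[pred p : 'I_N * 'I_N | (p.2 < p.1)%N]| = 'C(N, 2).
Proof.
rewrite -sum1_card.
rewrite (eq_bigl (fun p : 'I_N * 'I_N => predT p.1 && (p.2 < p.1)%N)) //.
rewrite -(@pair_big_dep _ _ _ 'I_N 'I_N predT (fun i j : 'I_N => (j < i)%N) (fun _ _ => 1%N)) /=.
rewrite -bin2_sum big_mkord; apply: eq_bigr => i _.
rewrite -(big_ord_widen N (fun _ => 1%N) (ltnW (ltn_ord i))).
by rewrite sum1_card card_ord.
Qed.


Section Cons.
Variable k : fieldType.
Variable n : nat.
Hypothesis hn : (0 < n)%N.
Notation B := 'rV[k]_n.
Notation W := 'M[k]_(n, n).
Notation bo := (bone k n).
Notation sp := (spow k n).

Lemma cf_add (u v : B) i : cf (u + v) i = cf u i + cf v i.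
Proof. by have := cf_lin 1 u v i; rewrite scale1r mul1r. Qed.
Lemma cf_scale a (u : B) i : cf (a *: u) i = a * cf u i.
Proof. by rewrite -[_ *: _]addr0 cf_lin cf0 addr0. Qed.

Lemma cf_bone0 : cf bo 0 = 1.
Proof. by rewrite cf_bone // coef1. Qed.

Lemma maxB_cf0 x : x \in maxB k n -> cf x 0 = 0.
Proof.
rewrite /maxB; move: x; apply: span_ind.
- exact: cf0.
- by move=> a u v hu hv; rewrite cf_lin hu hv mulr0 addr0.
move=> y /mapP [i]; rewrite mem_iota => /andP [h1 _] ->.
rewrite cf_spow_lt //; by case: eqP => //; lia.
Qed.

Lemma maxB_of x : cf x 0 = 0 -> x \in maxB k n.
Proof.
move=> h; rewrite (B_decomp x); apply: memv_suml => a _.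
case: (posnP a) => ha.
  by rewrite -cf_ord ha h scale0r mem0v.
apply: memvZ; apply: memv_span; apply: map_f; rewrite mem_iota; have := ltn_ord a; lia.
Qed.

Variable A : {vspace B}.
Hypothesis hA : is_subalgebra A.

Lemma maxAP x : reflect (x \in A /\ cf x 0 = 0) (x \in maxA A).
Proof.
rewrite /maxA memv_cap; apply: (iffP andP) => [[h1 h2]|[h1 h2]]; split => //.
  exact: maxB_cf0.
exact: maxB_of.
Qed.

Lemma M2_sub : (maxA2 A <= maxA A)%VS.
Proof.
apply/subvP; apply: prod_ind.
- exact: mem0v.
- by move=> a u v hu hv; rewrite memvD ?memvZ.
move=> x y /maxAP [hx hx0] /maxAP [hy hy0]; apply/maxAP; split.
  by apply: hA.2.
by rewrite -app_eps app_eps_bmul !app_eps hx0 mul0r.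
Qed.

Lemma sub_bone_M f : f \in A -> f - cf f 0 *: bo \in maxA A.
Proof.
move=> hf; apply/maxAP; split; first by rewrite memvB ?memvZ //; case: hA.
by rewrite -scaleNr cf_add cf_scale cf_bone0 mulr1 subrr.
Qed.

Variable t : B.
Hypothesis ht : t \in maxA A.

Let X := (maxA2 A + <[bo]> + <[t]>)%VS.
Let C := (maxA A :\: X)%VS.

Lemma dim_bound : (\dim (maxA A) <= \dim C + \dim (maxA2 A) + 1)%N.
Proof.
have e1 := dimv_cap_compl (maxA A) X.
have s : (maxA A :&: X <= maxA2 A + <[t]>)%VS.
  apply/subvP => z /memv_capP [hzM hzX].
  move: hzX => /memv_addP [z12 /memv_addP [z1 hz1 [z2 hz2 e12]] [z3 hz3 ez]].
  case/vlineP: hz2 => a e2; case/vlineP: hz3 => b e3.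
  subst.
  have : cf (z1 + a *: bo + b *: t) 0 = 0 by case/maxAP: hzM.
  rewrite !cf_add !cf_scale cf_bone0.
  have -> : cf z1 0 = 0 by case/maxAP: (subvP M2_sub _ hz1).
  have -> : cf t 0 = 0 by case/maxAP: ht.
  rewrite mulr1 mulr0 addr0 add0r => ->.
  by rewrite scale0r addr0; apply: memv_add => //; rewrite memvZ // memv_line.
have h1 := dimvS s.
have h2 := (dimv_add_leqif (maxA2 A) <[t]>).1.
have h3 : (\dim <[t]> <= 1)%N by rewrite dim_vline; case: (t != 0).
have h4 : (\dim (maxA A :&: X) <= \dim (maxA2 A) + 1)%N.
  apply: (leq_trans h1); apply: (leq_trans h2); by rewrite leq_add2l.
move: e1 h4; rewrite /C; clear; lia.
Qed.

Let pi := daddv_pi C X.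
Let bC := vbasis C.
Let r := \dim C.

Lemma hCX : (C :&: X = 0)%VS.
Proof. exact: capv_diff. Qed.

Lemma pi_X z : z \in X -> pi z = 0.
Proof.
move=> hz.
have hXC : (X :&: C = 0)%VS by rewrite capvC hCX.
have := daddv_pi_add hCX (memv_add (mem0v C) hz); rewrite add0r.
by rewrite (daddv_pi_id hXC hz) => /(congr1 (fun w => w - z)); rewrite addrK subrr.
Qed.

Lemma pi_C z : z \in C -> pi z = z.
Proof. exact: daddv_pi_id hCX. Qed.

Definition lamf (i : nat) (v : B) : k :=
  \sum_(l < \dim C | (l : nat) == i) coord bC l (pi v).

Lemma lamf_lin i a u v : lamf i (a *: u + v) = a * lamf i u + lamf i v.
Proof.
rewrite /lamf big_distrr -big_split /=; apply: eq_bigr => l _.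
by rewrite !linearP.
Qed.

Definition lc (i : nat) : 'cV[k]_n := \col_(a < n) lamf i (sp a).

Lemma app_lc i v : app (lc i) v = lamf i v.
Proof.
rewrite {2}(B_decomp v) (lin_sum _ _ (lamf_lin i)) /app mxE.
by apply: eq_bigr => a _; rewrite mxE.
Qed.

Lemma lc_X i z : z \in X -> app (lc i) z = 0.
Proof.
move=> hz; rewrite app_lc /lamf pi_X // big1 // => l _; exact: linear0.
Qed.

Definition av (j : nat) : B := bC`_j.

Lemma av_C j : av j \in C.
Proof.
rewrite /av; case: (ltnP j (size bC)) => h.
  apply: vbasis_mem; exact: mem_nth.
by rewrite nth_default // mem0v.
Qed.

Lemma av_M j : av j \in maxA A.
Proof. exact: (subvP (diffvSl _ _) _ (av_C j)). Qed.

Lemma lc_av i j : (i < r)%N -> (j < r)%N -> app (lc i) (av j) = (i == j)%:R.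
Proof.
move=> hi hj; rewrite app_lc /lamf pi_C ?av_C //.
rewrite (big_pred1 (Ordinal hi)); last by [].
have := coord_free (Ordinal hj) (Ordinal hi) (basis_free (vbasisP C)).
rewrite /av /= => ->; by rewrite eq_sym.
Qed.

Lemma bo_X : bo \in X.
Proof. by rewrite /X; apply: (subvP (addvSl _ _)); apply: (subvP (addvSr _ _)); exact: memv_line. Qed.
Lemma t_X : t \in X.
Proof. by rewrite /X; apply: (subvP (addvSr _ _)); exact: memv_line. Qed.
Lemma M2_X z : z \in maxA2 A -> z \in X.
Proof. by move=> hz; rewrite /X; apply: (subvP (addvSl _ _)); apply: (subvP (addvSl _ _)). Qed.

Lemma bone_A : bo \in A.
Proof. by case: hA. Qed.

Lemma bmul_M2 f g : f \in maxA A -> g \in maxA A -> bmul f g \in maxA2 A.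
Proof.
move=> hf hg; apply: prod_mem => //.
  by move=> *; rewrite bmul_linl.
by move=> *; rewrite bmul_linr.
Qed.

Lemma lc_der i : is_der A (lc i).
Proof.
move=> f g hf hg.
set cf0 := cf f 0; set cg0 := cf g 0.
have ef : f = cf0 *: bo + (f - cf0 *: bo) by rewrite addrC subrK.
have eg : g = cg0 *: bo + (g - cg0 *: bo) by rewrite addrC subrK.
have hf' := sub_bone_M hf; have hg' := sub_bone_M hg.
have -> : bmul f g = bmul (cf0 *: bo + (f - cf0 *: bo)) (cg0 *: bo + (g - cg0 *: bo)).
  by rewrite -ef -eg.
rewrite bmul_linl bmul1 bmul_linr bmulr1.
rewrite !app_lin (lc_X i (M2_X (bmul_M2 hf' hg'))) addr0 !app_eps.
have -> : app (lc i) (f - cf0 *: bo) = app (lc i) f.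
  by rewrite -scaleNr addrC app_lin (lc_X i bo_X) mulr0 add0r.
have -> : app (lc i) (g - cg0 *: bo) = app (lc i) g.
  by rewrite -scaleNr addrC app_lin (lc_X i bo_X) mulr0 add0r.

by rewrite (lc_X i bo_X) mulr0 add0r.
Qed.

Let IA := diagI A.
Let IA2 := diagI2 A.
Let T0 := tens t bo.

Lemma t_A : t \in A.
Proof. by case/maxAP: ht. Qed.
Lemma t_cf0 : cf t 0 = 0.
Proof. by case/maxAP: ht. Qed.

Lemma T0_A : T0 \in tensA A.
Proof. by apply: tens_mem; [exact: t_A | exact: bone_A]. Qed.

Lemma K_cc0 u : u \in IA -> cc u = 0.
Proof. by case/diagIP => _ h; rewrite MI4 h app0. Qed.

Lemma K_ab l u : is_der A l -> u \in IA -> pair (eps k n) l u = - pair l (eps k n) u.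
Proof.
move=> dl /diagIP [hu h]; have := MI3 dl hu; rewrite h app0 => /eqP.
by rewrite addr_eq0 => /eqP.
Qed.

Lemma K1 l m u v : is_der A l -> is_der A m -> u \in IA -> v \in IA ->
  pair l m (tmul u v) - pair m l (tmul u v) = 0.
Proof.
move=> dl dm hu hv; have hu' : u \in tensA A by case/diagIP: hu.
have hv' : v \in tensA A by case/diagIP: hv.
rewrite (MI1 dl dm hu' hv') (MI1 dm dl hu' hv') !K_cc0 // !(K_ab dl) // !(K_ab dm) //.
ring.
Qed.

Lemma K2 l u v : is_der A l -> u \in IA -> v \in IA -> pair l (eps k n) (tmul u v) = 0.
Proof.
move=> dl hu hv; have hu' : u \in tensA A by case/diagIP: hu.
have hv' : v \in tensA A by case/diagIP: hv.
by rewrite (MI2 dl hu' hv') !K_cc0 // mul0r mulr0 addr0.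
Qed.

Lemma T0_vals l : app l t = 0 -> cc T0 = 0 /\ pair l (eps k n) T0 = 0.
Proof.
move=> hl; rewrite /cc /T0 !pair_tens app_eps t_cf0 hl !mul0r; by split.
Qed.

Lemma K3 l m x : is_der A l -> is_der A m -> app l t = 0 -> x \in IA ->
  pair l m (tmul T0 x) = 0.
Proof.
move=> dl dm hl hx; have hx' : x \in tensA A by case/diagIP: hx.
have [h1 h2] := T0_vals hl.
rewrite (MI1 dl dm T0_A hx') h1 h2 (K_cc0 hx) /T0 pair_tens app_eps t_cf0.
ring.
Qed.

Lemma K4 l x : is_der A l -> app l t = 0 -> x \in IA ->
  pair l (eps k n) (tmul T0 x) = 0.
Proof.
move=> dl hl hx; have hx' : x \in tensA A by case/diagIP: hx.
have [h1 h2] := T0_vals hl.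
by rewrite (MI2 dl T0_A hx') h1 h2 (K_cc0 hx) mul0r mulr0 addr0.
Qed.

Lemma pairB c d (P Q : W) : pair c d (P - Q) = pair c d P - pair c d Q.
Proof.
have -> : P - Q = (-1) *: Q + P by rewrite scaleN1r addrC.
by rewrite pair_lin mulN1r addrC.
Qed.

Lemma appB c (u v : B) : app c (u - v) = app c u - app c v.
Proof.
have -> : u - v = (-1) *: v + u by rewrite scaleN1r addrC.
by rewrite app_lin mulN1r addrC.
Qed.

Lemma Df_IA g : g \in A -> Df g \in IA.
Proof.
move=> hg; apply/diagIP; split.
  by rewrite /Df memvB // tens_mem // bone_A.
by rewrite /Df raddfB /= !tmult_tens bmul1 bmulr1 subrr.
Qed.

Lemma Qf_IA f g : f \in A -> g \in A -> Qf f g \in IA.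
Proof.
move=> hf hg; apply/diagIP; split.
  by rewrite /Qf memvB // tens_mem // ?bone_A //; apply: hA.2.
by rewrite /Qf raddfB /= !tmult_tens bmulr1 subrr.
Qed.

Lemma lc_t i : app (lc i) t = 0.
Proof. exact: lc_X t_X. Qed.

Lemma av_A j : av j \in A.
Proof. by case/maxAP: (av_M j). Qed.

Definition I2 := ('I_r.+1 * 'I_r.+1)%type.
Definition P2 := [pred p : I2 | (p.2 < p.1)%N].
Definition xf (p : I2) : W :=
  if (p.1 : nat) == r then Df (av p.2) else Qf (av p.2) (av p.1).
Definition phif (p : I2) (P : W) : k :=
  if (p.1 : nat) == r then pair (lc p.2) (eps k n) P
  else pair (lc p.2) (lc p.1) P - pair (lc p.1) (lc p.2) P.
Definition df (p : I2) : k := if (p.1 : nat) == r then 1 else -1.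

Lemma phif_lin p a u v : phif p (a *: u + v) = a * phif p u + phif p v.
Proof. rewrite /phif; case: ifP => _; rewrite !pair_lin; ring. Qed.

Lemma vals_bo i : app (lc i) bo = 0.
Proof. exact: lc_X bo_X. Qed.
Lemma vals_eps_av j : app (eps k n) (av j) = 0.
Proof. by rewrite app_eps; case/maxAP: (av_M j). Qed.
Lemma vals_prod i a b : app (lc i) (bmul (av a) (av b)) = 0.
Proof. exact: lc_X (M2_X (bmul_M2 (av_M a) (av_M b))). Qed.

Lemma phif_dual p q : P2 p -> P2 q -> phif p (xf q) = (p == q)%:R * df q.
Proof.
case: p => j' i'; case: q => j i; rewrite /P2 /= => hp hq.
have hj' := ltn_ord j'; have hj := ltn_ord j.
rewrite /phif /xf /df /= xpair_eqE -!val_eqE /=.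
case: (eqVneq (j' : nat) r) => hj'r; case: (eqVneq (j : nat) r) => hjr.
- rewrite /Df pairB !pair_tens vals_bo app_eps_bone // (lc_av (i := i')) ?(lc_av (i := i')); try lia.
  rewrite hj'r hjr eqxx /=; ring.
- rewrite /Qf pairB !pair_tens vals_prod vals_eps_av.
  rewrite hj'r (_ : (r == j) = false); last by apply/negbTE; rewrite eq_sym.
  rewrite /=; ring.
- rewrite /Df !pairB !pair_tens !vals_bo hjr (_ : ((j' : nat) == r) = false); last exact/negbTE.
  rewrite /=; ring.
rewrite /Qf !pairB !pair_tens !vals_prod.
rewrite (lc_av (i := i')); try lia.
rewrite (lc_av (i := j')); try lia.
rewrite (lc_av (i := j')); try lia.
rewrite (lc_av (i := i')); try lia.
have -> : (((j' : nat) == i)%:R * ((i' : nat) == j)%:R : k) = 0.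
  case: eqP => h1; case: eqP => h2 //=; rewrite ?mul0r ?mulr0 //; lia.
case: eqP => h1; case: eqP => h2 /=; ring.
Qed.

Lemma lower : (\dim (Lmap T0 @: IA + IA2) + 'C(r.+1, 2) <= \dim IA)%N.
Proof.
rewrite -count_pairs.
apply: (@lowerb _ _ I2 P2 xf phif df).
- exact: phif_lin.
- exact: phif_dual.
- by move=> p _; rewrite /df; case: ifP => _; rewrite ?oppr_eq0 oner_neq0.
- move=> [j i] /= _; rewrite /xf /=; case: ifP => _.
    by apply: Df_IA; exact: av_A.
  by apply: Qf_IA; exact: av_A.
- by rewrite subv_add Lmap_A ?T0_A // diagI2_sub.
move=> [j i] z /= hp /memv_addP [z1 /memv_imgP [x hx ->] [z2 hz2 ->]].
have -> : Lmap T0 x + z2 = 1 *: Lmap T0 x + z2 by rewrite scale1r.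
rewrite phif_lin LmapE mul1r.
have -> : phif (j, i) (tmul T0 x) = 0.
  rewrite /phif /=; case: ifP => _.
    by apply: K4 => //; [exact: lc_der | exact: lc_t].
  by rewrite !K3 ?subrr //; try exact: lc_der; exact: lc_t.
rewrite add0r; move: z2 hz2; apply: prod_ind.
- by rewrite /phif; case: ifP => _; rewrite ?pair0 ?subrr.
- by move=> a u v hu hv; rewrite phif_lin hu hv mulr0 addr0.
move=> u v hu hv; rewrite /phif; case: ifP => _.
  by apply: K2 => //; exact: lc_der.
by apply: K1 => //; exact: lc_der.
Qed.

End Cons.

Unset Implicit Arguments. Set Strict Implicit. Set Printing Implicit Defensive.

Theorem proposition2p14 (k : fieldType) (hk : perfect_field k) (n : nat) (hn : (0 < n)%N)
  (A : {vspace 'rV[k]_n}) (hA : is_subalgebra A) (e : nat) (he1 : (1 <= e)%N)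
  (heM : forall a, a \in maxA A -> in_spowB e a)
  (hemax : ~ (forall a, a \in maxA A -> in_spowB e.+1 a))
  (hlt : (e < 'C(cotdim A, 2))%N) :
  Omega_map_ker_nonzero A.
Proof.
case: (classic (Omega_map_ker_nonzero A)) => // Hno; exfalso.
have H : forall x, x \in diagI A -> x \in diagI2 (fullv : {vspace 'rV[k]_n}) -> x \in diagI2 A.
  move=> x h1 h2; apply/negPn/negP => h3; apply: Hno; by exists x; split.
have [t [ht hnt]] : exists t, t \in maxA A /\ ~ in_spowB e.+1 t.
  apply: NNPP => hne; apply: hemax => a ha; apply: NNPP => hna; apply: hne; by exists a.
have ht0 : forall i, (i < e)%N -> cf t i = 0 by apply/in_spowBP; apply: heM.
have hte : cf t e != 0.
  apply/eqP => h; apply: hnt; apply/in_spowBP => i hi.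
  case: (ltnP i e) => h'; first exact: ht0.
  by have -> : i = e by lia.
have hup := upper ht0 hte.
have hlow := lower hn hA ht.
have hdb := dim_bound hn hA ht.
have q1 := dim_quot (diagI A) (diagI2 A) (Lmap (tens t (bone k n))).
have q2 := dim_quot (diagI (fullv : {vspace 'rV[k]_n})) (diagI2 fullv) (Lmap (tens t (bone k n))).
have c3 := chain3 (L := Lmap (tens t (bone k n))) (diagI_sub A) (diagI2_subB A)
  (diagI2_sub (@subalg_full k n)) (Lmap_B2 _) H.
have hN := arith q1 q2 c3 hup hlow.
move: hN; set r := \dim _ => hN.
have hm : (cotdim A <= r.+1)%N by rewrite /cotdim; move: hdb; rewrite -/r; lia.
have := leq_bin2l 2 hm; lia.
Qed.
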